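(* Let $U>0$. For every integer $L>\frac{8}{U}$ let $m_L$ be an integer with $\frac{L}{2} < m_L < \frac{3L}{2}$, and let $\xi_{m_L}$ denote the unique positive solution $\xi$ of $$\sinh(\xi) = -\frac{U}{4\cos(m_L\pi/L)}\,\frac{\sinh(\xi L)}{\cosh(\xi L) - (-1)^{m_L}}.$$ Suppose $\lim_{L\to\infty} m_L\frac{\pi}{L} = q$ with $\frac{\pi}{2} < q < \frac{3\pi}{2}$. Then $$\lim_{L\to\infty}\xi_{m_L} = -\operatorname{arsinh}\left(\frac{U}{4\cos(q)}\right).$$
   Context: For $N=2$ electrons and one down spin on a lattice of length $L$, a $k$-$\Lambda$ two-string solution of the Lieb-Wu equations $e^{ik_jL} = \frac{\Lambda-\sin k_j - iU/4}{\Lambda - \sin k_j + iU/4}$ ($j=1,2$), $\prod_{j}\frac{\Lambda-\sin k_j - iU/4}{\Lambda - \sin k_j + iU/4}=1$, has $k_{1,2} = q\mp i\xi$ with $q = m\pi/L$, $\xi>0$ solving the displayed equation and $\Lambda = \sin(q)\cosh(\xi)$; for $U>0$, $L>8/U$ and $L/2<m<3L/2$ the displayed equation has exactly one positive solution. The result says that in the limit $L\to\infty$ these strings approach the ideal string positions $\sinh\xi = -U/(4\cos q)$. *)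

(* Defs.v *)
From Stdlib Require Export Reals ZArith.
Open Scope R_scope.

Definition string_eq (U : R) (L : nat) (m : Z) (xi : R) : Prop :=
  sinh xi = - (U / (4 * cos (IZR m * PI / INR L)))
            * (sinh (xi * INR L) / (cosh (xi * INR L) - powerRZ (-1) m)).

(* Main.v *)
Require Import Defs.
From Stdlib Require Import Reals Lra Psatz ZArith.
Open Scope R_scope.

Lemma pow_m1 : forall n, (-1)^n = 1 \/ (-1)^n = -1.
Proof. induction n as [|n IH]; simpl; [left; lra|]. destruct IH as [H|H]; rewrite H; [right|left]; lra. Qed.

Lemma powerRZ_m1 : forall z, powerRZ (-1) z = 1 \/ powerRZ (-1) z = -1.
Proof.
  intros [|p|p]; simpl; [left; lra| apply pow_m1|].
  destruct (pow_m1 (Pos.to_nat p)) as [H|H]; rewrite H; [left|right]; field.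
Qed.

Lemma expm_facts : forall y, 0 < y -> 0 < exp (-y) < 1 /\ exp (-y) * exp y = 1 /\ 1 + y < exp y.
Proof.
  intros y Hy. assert (H1 := exp_ineq1 y ltac:(lra)).
  assert (H2 : exp (-y) * exp y = 1) by (rewrite <- exp_plus; replace (-y+y) with 0 by ring; apply exp_0).
  assert (H3 := exp_pos (-y)). split; [split; nra|split; auto].
Qed.

Lemma cosh_gt1 : forall y, 0 < y -> 1 < cosh y.
Proof. intros y Hy. destruct (expm_facts y Hy) as [[H1 H2] [H3 H4]]. unfold cosh. nra. Qed.

Lemma sinh_gt : forall y, 0 < y -> y/2 < sinh y.
Proof. intros y Hy. destruct (expm_facts y Hy) as [[H1 H2] [H3 H4]]. unfold sinh. lra. Qed.

Lemma cosh_sinh : forall y, cosh y = sinh y + exp (-y).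
Proof. intros; unfold cosh, sinh; field. Qed.

Lemma arch : forall T, exists N, forall n, (n >= N)%nat -> T < INR n.
Proof.
  intros T. destruct (archimed (Rabs T)) as [H1 _].
  assert (Hp : (0 <= up (Rabs T))%Z).
  { apply le_IZR. pose proof (Rabs_pos T). lra. }
  exists (Z.to_nat (up (Rabs T))). intros n Hn.
  apply le_INR in Hn. rewrite INR_IZR_INZ, Z2Nat.id in Hn by auto.
  pose proof (Rle_abs T). lra.
Qed.

Lemma Hneg : forall U c s b l G,
  -1 <= c <= 0 -> (s = 1 \/ s = -1) -> 0 < b -> 0 < l -> 0 < G ->
  G/2 <= U + 4*c*sinh b -> 16*sinh b < G * sinh (b*l) ->
  -4*c*sinh b*(cosh (b*l) - s) - U*sinh (b*l) < 0.
Proof.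
  intros U c s b l G Hc Hs Hb Hl HG HK HS.
  rewrite cosh_sinh.
  assert (Hbl : 0 < b*l) by nra.
  destruct (expm_facts _ Hbl) as [[E1 E2] _].
  pose proof (sinh_gt _ Hb) as Hsb. pose proof (sinh_gt _ Hbl) as HSl.
  set (S := sinh (b*l)) in *. set (e := exp (-(b*l))) in *. set (sb := sinh b) in *.
  replace (-4*c*sb*(S+e-s) - U*S) with (-(U+4*c*sb)*S - 4*c*sb*(e-s)) by ring.
  assert (T1 : (G/2)*S <= (U+4*c*sb)*S) by nra.
  assert (T2 : -4*c*sb*(e-s) <= 8*sb).
  { destruct Hs as [->| ->].
    - assert (0 <= -4*c*sb) by nra. nra.
    - assert (0 <= -c*sb) by nra. nra. }
  nra.
Qed.

Lemma Hpos : forall U c s b l G,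
  -1 <= c <= 0 -> (s = 1 \/ s = -1) -> 0 < b -> 0 < l -> 0 < G ->
  G/2 <= -(U + 4*c*sinh b) -> 16*sinh b < G * sinh (b*l) ->
  0 < -4*c*sinh b*(cosh (b*l) - s) - U*sinh (b*l).
Proof.
  intros U c s b l G Hc Hs Hb Hl HG HK HS.
  rewrite cosh_sinh.
  assert (Hbl : 0 < b*l) by nra.
  destruct (expm_facts _ Hbl) as [[E1 E2] _].
  pose proof (sinh_gt _ Hb) as Hsb. pose proof (sinh_gt _ Hbl) as HSl.
  set (S := sinh (b*l)) in *. set (e := exp (-(b*l))) in *. set (sb := sinh b) in *.
  replace (-4*c*sb*(S+e-s) - U*S) with (-(U+4*c*sb)*S - 4*c*sb*(e-s)) by ring.
  assert (T1 : (G/2)*S <= -(U+4*c*sb)*S) by nra.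
  assert (T2 : -8*sb <= -4*c*sb*(e-s)).
  { destruct Hs as [->| ->].
    - assert (0 <= -c*sb) by nra. nra.
    - assert (0 <= -4*c*sb) by nra. nra. }
  nra.
Qed.

Lemma Hcont : forall c s l U, continuity (fun x => -4*c*sinh x*(cosh (x*l) - s) - U*sinh (x*l)).
Proof.
  intros. apply derivable_continuous. reg.
Qed.

Theorem mainTheorem4 (U q : R) (m : nat -> Z) (xi : nat -> R) :
  0 < U ->
  (forall L : nat, INR L > 8 / U ->
     INR L / 2 < IZR (m L) < 3 * INR L / 2 /\
     0 < xi L /\ string_eq U L (m L) (xi L) /\
     (forall x, 0 < x -> string_eq U L (m L) x -> x = xi L)) ->
  Un_cv (fun L => IZR (m L) * PI / INR L) q ->
  PI / 2 < q < 3 * PI / 2 ->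
  Un_cv xi (- arcsinh (U / (4 * cos q))).
Proof.
  intros HU Hspec Hcv Hq.
  assert (Hc : cos q < 0) by (apply cos_lt_0; lra).
  set (c := cos q) in *.
  set (A := -(U/(4*c))).
  assert (HUA : U = -4*c*A) by (unfold A; field; lra).
  assert (HA : 0 < A) by nra.
  set (a := - arcsinh (U/(4*c))).
  assert (Hsa : sinh a = A).
  { unfold a, A. set (w := arcsinh (U/(4*c))).
    assert (sinh w = U/(4*c)) by apply sinh_arcsinh.
    unfold sinh in *. rewrite Ropp_involutive. lra. }
  assert (Ha : 0 < a).
  { destruct (Rlt_or_le 0 a) as [h|h]; auto.
    destruct (Req_dec a 0) as [h'|h'].
    - rewrite h', sinh_0 in Hsa. lra.
    - assert (sinh a < sinh 0) by (apply sinh_lt; lra). rewrite sinh_0 in *. lra. }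
  intros eps Heps.
  set (e := Rmin (eps/2) (a/2)).
  assert (He1 : 0 < e) by (unfold e; apply Rmin_glb_lt; lra).
  assert (He2 : e <= eps/2) by apply Rmin_l.
  assert (He3 : e <= a/2) by apply Rmin_r.
  set (b1 := a - e). set (b2 := a + e).
  assert (Hb1 : 0 < b1) by (unfold b1; lra).
  assert (Hb2 : 0 < b2) by (unfold b2; lra).
  assert (S1 : sinh b1 < A) by (rewrite <- Hsa; apply sinh_lt; unfold b1; lra).
  assert (S2 : A < sinh b2) by (rewrite <- Hsa; apply sinh_lt; unfold b2; lra).
  assert (S0 : 0 < sinh b1) by (pose proof (sinh_gt _ Hb1); lra).
  set (G1 := U + 4*c*sinh b1).
  set (G2 := -(U + 4*c*sinh b2)).
  assert (HG1 : 0 < G1) by (unfold G1; rewrite HUA; nra).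
  assert (HG2 : 0 < G2) by (unfold G2; rewrite HUA; nra).
  set (G := Rmin G1 G2).
  assert (HG : 0 < G) by (unfold G; apply Rmin_glb_lt; lra).
  assert (HGa : G <= G1) by apply Rmin_l.
  assert (HGb : G <= G2) by apply Rmin_r.
  assert (Hcc := continuity_seq cos _ q (continuity_cos q) Hcv).
  destruct (Hcc (G/(8*sinh b2)) ltac:(apply Rdiv_lt_0_compat; lra)) as [N1 HN1].
  destruct (arch (Rmax (8/U) (Rmax (32*sinh b1/(G*b1)) (32*sinh b2/(G*b2))))) as [N0 HN0].
  exists (Nat.max N1 N0). intros n Hn.
  assert (Hn0 := HN0 n ltac:(lia)).
  assert (Hn1 := HN1 n ltac:(lia)).
  pose proof (Rmax_l (8/U) (Rmax (32*sinh b1/(G*b1)) (32*sinh b2/(G*b2)))) as M1.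
  pose proof (Rmax_r (8/U) (Rmax (32*sinh b1/(G*b1)) (32*sinh b2/(G*b2)))) as M2.
  pose proof (Rmax_l (32*sinh b1/(G*b1)) (32*sinh b2/(G*b2))) as M3.
  pose proof (Rmax_r (32*sinh b1/(G*b1)) (32*sinh b2/(G*b2))) as M4.
  set (l := INR n) in *.
  assert (H8 : l > 8/U) by lra.
  assert (Hl : 0 < l) by (assert (0 < 8/U) by (apply Rdiv_lt_0_compat; lra); lra).
  destruct (Hspec n H8) as [[Hm1 Hm2] [Hxi [Heq Huniq]]].
  fold l in Hm1, Hm2, Heq, Huniq.
  set (r := IZR (m n) * PI / l) in *.
  assert (Hr : r * l = IZR (m n) * PI) by (unfold r; field; lra).
  pose proof PI_RGT_0 as HPI.
  assert (Hr1 : PI/2 < r) by nra.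
  assert (Hr2 : r < 3*(PI/2)) by nra.
  assert (HcL : cos r < 0) by (apply cos_lt_0; lra).
  pose proof (COS_bound r) as [Cb _].
  unfold R_dist in Hn1. fold c in Hn1.
  set (cL := cos r) in *.
  assert (Hcd : Rabs (cL - c) * (8*sinh b2) < G).
  { apply (Rmult_lt_compat_r (8*sinh b2)) in Hn1; [|lra].
    replace (G / (8 * sinh b2) * (8 * sinh b2)) with G in Hn1 by (field; lra). lra. }
  assert (Hcd1 : Rabs ((cL - c) * (4*sinh b1)) < G/2).
  { rewrite Rabs_mult, (Rabs_right (4*sinh b1)) by lra. pose proof (Rabs_pos (cL-c)). nra. }
  assert (Hcd2 : Rabs ((cL - c) * (4*sinh b2)) < G/2).
  { rewrite Rabs_mult, (Rabs_right (4*sinh b2)) by lra. pose proof (Rabs_pos (cL-c)). nra. }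
  apply Rabs_def2 in Hcd1. apply Rabs_def2 in Hcd2.
  assert (Hl1 : 16 * sinh b1 < G * sinh (b1 * l)).
  { pose proof (sinh_gt (b1*l) ltac:(nra)).
    assert (32 * sinh b1 / (G*b1) * (G*b1) = 32 * sinh b1) by (field; lra).
    assert (32 * sinh b1 / (G*b1) * (G*b1) < l * (G*b1)) by (apply Rmult_lt_compat_r; nra).
    nra. }
  assert (Hl2 : 16 * sinh b2 < G * sinh (b2 * l)).
  { pose proof (sinh_gt (b2*l) ltac:(nra)).
    assert (32 * sinh b2 / (G*b2) * (G*b2) = 32 * sinh b2) by (field; lra).
    assert (32 * sinh b2 / (G*b2) * (G*b2) < l * (G*b2)) by (apply Rmult_lt_compat_r; nra).
    nra. }
  set (s := powerRZ (-1) (m n)) in *.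
  assert (Hs := powerRZ_m1 (m n)). fold s in Hs.
  assert (F1 := Hneg U cL s b1 l G ltac:(lra) Hs Hb1 Hl HG ltac:(unfold G1 in HGa; lra) Hl1).
  assert (F2 := Hpos U cL s b2 l G ltac:(lra) Hs Hb2 Hl HG ltac:(unfold G2 in HGb; lra) Hl2).
  assert (Hb12 : b1 < b2) by (unfold b1, b2; lra).
  destruct (IVT _ b1 b2 (Hcont cL s l U) Hb12 F1 F2) as [z [[Hz1 Hz2] Hz]].
  assert (Hz0 : 0 < z) by lra.
  assert (HD : 0 < cosh (z*l) - s).
  { pose proof (cosh_gt1 (z*l) ltac:(nra)). destruct Hs; lra. }
  assert (Hzs : string_eq U n (m n) z).
  { unfold string_eq. fold l. fold r. fold cL. fold s.
    replace (sinh z) with ((-4*cL*sinh z*(cosh (z*l) - s)) / (-4*cL*(cosh (z*l) - s)))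
      by (field; split; lra).
    replace (-4*cL*sinh z*(cosh (z*l) - s)) with (U*sinh (z*l)) by lra.
    field. split; lra. }
  rewrite <- (Huniq z Hz0 Hzs).
  unfold R_dist. apply Rabs_def1; unfold b1, b2 in *; lra.
Qed.
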